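(* Let $(X,\|\cdot,\cdot\|)$ be a $2$-normed space, $E\subseteq X$, and $f:E\to X$. If $f$ is statistically ward continuous on $E$, then $f$ is sequentially continuous on $E$: for every $x_0\in E$ and every sequence $(x_n)$ in $E$ converging to $x_0$, $(f(x_n))$ converges to $f(x_0)$.
   Context: A $2$-normed space is a real linear space $X$ with $\dim X>1$ together with a function $\|\cdot,\cdot\|:X^2\to\mathbb{R}$ such that for all $x,y,z\in X$, $\alpha\in\mathbb{R}$: (1) $\|x,y\|=0$ iff $x,y$ are linearly dependent; (2) $\|x,y\|=\|y,x\|$; (3) $\|\alpha x,y\|=|\alpha|\|x,y\|$; (4) $\|x,y+z\|\le\|x,y\|+\|x,z\|$. A sequence $(x_n)$ in $X$ converges to $x\in X$ if $\lim_{n\to\infty}\|x_n-x,z\|=0$ for every $z\in X$. For a sequence $(x_k)$ write $\Delta x_k=x_{k+1}-x_k$. A sequence $(x_k)$ in $X$ is statistically quasi-Cauchy if for every $\epsilon>0$ and every $z\in X$, $\lim_{n\to\infty}\frac1n|\{k\le n:\|\Delta x_k,z\|\ge\epsilon\}|=0$. A function $f:E\to X$ is statistically ward continuous on $E$ if $(f(x_k))$ is statistically quasi-Cauchy whenever $(x_k)$ is a statistically quasi-Cauchy sequence of points of $E$. *)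

(* Defs.v *)
From Stdlib Require Import Reals Lra Lia List ClassicalEpsilon.
Open Scope R_scope.

Record RVS := {
  car :> Type;
  vzero : car;
  vadd : car -> car -> car;
  vopp : car -> car;
  vscal : R -> car -> car;
  vadd_assoc : forall x y z, vadd x (vadd y z) = vadd (vadd x y) z;
  vadd_comm : forall x y, vadd x y = vadd y x;
  vadd_0 : forall x, vadd x vzero = x;
  vadd_opp : forall x, vadd x (vopp x) = vzero;
  vscal_1 : forall x, vscal 1 x = x;
  vscal_assoc : forall a b x, vscal a (vscal b x) = vscal (a * b) x;
  vscal_distr_v : forall a x y, vscal a (vadd x y) = vadd (vscal a x) (vscal a y);
  vscal_distr_s : forall a b x, vscal (a + b) x = vadd (vscal a x) (vscal b x)
}.

Definition vsub {X : RVS} (x y : X) : X := vadd X x (vopp X y).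

Definition lin_dep {X : RVS} (x y : X) : Prop :=
  exists a b : R, (a <> 0 \/ b <> 0) /\ vadd X (vscal X a x) (vscal X b y) = vzero X.

Record TwoNormed := {
  tn_space :> RVS;
  tn : tn_space -> tn_space -> R;
  tn_dim : exists x y : tn_space, ~ lin_dep x y;
  tn_zero : forall x y, tn x y = 0 <-> lin_dep x y;
  tn_sym : forall x y, tn x y = tn y x;
  tn_scal : forall (a : R) x y, tn (vscal tn_space a x) y = Rabs a * tn x y;
  tn_tri : forall x y z, tn x (vadd tn_space y z) <= tn x y + tn x z
}.

Definition tn_conv {X : TwoNormed} (u : nat -> X) (l : X) : Prop :=
  forall z : X, Un_cv (fun n => tn X (vsub (u n) l) z) 0.

Definition delta {X : RVS} (u : nat -> X) (k : nat) : X := vsub (u (S k)) (u k).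

(* #{ k in {1,...,n} : P k } (sequences indexed from 1 in the paper:
   index k of the paper is index (k-1) here, i.e. k in {0,...,n-1}) *)
Definition count_lt (P : nat -> Prop) (n : nat) : nat :=
  length (filter (fun k => if excluded_middle_informative (P k) then true else false)
                 (seq 0 n)).

Definition stat_quasi_cauchy {X : TwoNormed} (u : nat -> X) : Prop :=
  forall (eps : R) (z : X), eps > 0 ->
    Un_cv (fun n => INR (count_lt (fun k => tn X (delta u k) z >= eps) n) / INR n) 0.

Definition stat_ward_continuous {X : TwoNormed} (E : X -> Prop) (f : X -> X) : Prop :=
  forall u : nat -> X, (forall n, E (u n)) -> stat_quasi_cauchy u ->
    stat_quasi_cauchy (fun n => f (u n)).

(* Main.v *)
Require Import Defs.
From Stdlib Require Import Reals.
From Stdlib Require Import ZArith Lra Lia List Arith Classical ClassicalEpsilon.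
Open Scope R_scope.

Section Aux.
Variable X : TwoNormed.

Lemma inv_uniq (v w : X) : vadd X v w = vzero X -> w = vopp X v.
Proof.
  intro H.
  rewrite <- (vadd_0 X w), <- (vadd_opp X v), vadd_assoc, (vadd_comm X w v), H.
  rewrite vadd_comm. apply vadd_0.
Qed.

Lemma scal0 (v : X) : vscal X 0 v = vzero X.
Proof.
  assert (Hs : vscal X 0 v = vadd X (vscal X 0 v) (vscal X 0 v)).
  { rewrite <- vscal_distr_s. f_equal. lra. }
  rewrite <- (vadd_opp X (vscal X 0 v)).
  rewrite Hs at 2. rewrite <- vadd_assoc, vadd_opp, vadd_0. reflexivity.
Qed.

Lemma scalm1 (v : X) : vscal X (-1) v = vopp X v.
Proof.
  apply inv_uniq.
  rewrite <- (vscal_1 X v) at 1. rewrite <- vscal_distr_s.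
  replace (1 + -1) with 0 by lra. apply scal0.
Qed.

Lemma vsub_swap (a b : X) : vsub a b = vscal X (-1) (vsub b a).
Proof.
  rewrite scalm1. apply inv_uniq. unfold vsub.
  rewrite vadd_assoc, <- (vadd_assoc X b (vopp X a) a).
  rewrite (vadd_comm X (vopp X a) a), vadd_opp, vadd_0. apply vadd_opp.
Qed.

Lemma Rabs_m1 : Rabs (-1) = 1.
Proof. rewrite Rabs_left; lra. Qed.

Lemma tn_swap (a b z : X) : tn X (vsub a b) z = tn X (vsub b a) z.
Proof.
  rewrite vsub_swap, tn_scal. rewrite Rabs_m1. lra.
Qed.

Lemma tn_nonneg (a z : X) : 0 <= tn X a z.
Proof.
  assert (H0 : tn X z (vzero X) = 0).
  { apply tn_zero. exists 0, 1. split. right; lra.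
    rewrite scal0, vscal_1. apply vadd_0. }
  assert (H := tn_tri X z a (vopp X a)).
  rewrite vadd_opp, H0, <- scalm1, (tn_sym X z (vscal _ _ _)), tn_scal, Rabs_m1 in H.
  rewrite (tn_sym X z a) in H. lra.
Qed.

Lemma delta_alt (g : X -> X) (a : X) (b : nat -> X) (k : nat) :
  let v := fun k => g (if Nat.even k then a else b (Nat.div2 k)) in
  delta v k = vsub (g (b (Nat.div2 k))) (g a) \/
  delta v k = vsub (g a) (g (b (Nat.div2 k))).
Proof.
  intro v. unfold delta, v.
  destruct (Nat.Even_or_Odd k) as [[j ->]|[j ->]].
  - left. rewrite Nat.even_even, Nat.even_succ, Nat.odd_even, Nat.div2_double.
    rewrite Nat.div2_succ_double. reflexivity.
  - right. replace (S (2 * j + 1)) with (2 * (S j))%nat by lia.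
    rewrite Nat.even_even, Nat.even_odd.
    replace (2 * j + 1)%nat with (S (2 * j)) by lia.
    rewrite Nat.div2_succ_double. reflexivity.
Qed.

Lemma count_all (P : nat -> Prop) n : (forall k, P k) -> count_lt P n = n.
Proof.
  intro HP. unfold count_lt.
  rewrite (proj2 (filter_ext_in_iff _ (fun _ => true) _)).
  - rewrite filter_true. apply length_seq.
  - intros k _. destruct (excluded_middle_informative (P k)) as [_|n0]; [reflexivity|exfalso; exact (n0 (HP k))].
Qed.

Lemma count_bound (P : nat -> Prop) N :
  (forall k, (k >= N)%nat -> ~ P k) -> forall n, (count_lt P n <= N)%nat.
Proof.
  intros HP n. induction n.
  - unfold count_lt; simpl. lia.
  - unfold count_lt in *. rewrite seq_S, filter_app, length_app.
    destruct (le_lt_dec N n).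
    + simpl. destruct (excluded_middle_informative (P n)) as [p|]; simpl.
      * exfalso. exact (HP n l p).
      * lia.
    + assert (length (filter (fun k => if excluded_middle_informative (P k) then true else false) (seq 0 n)) <= n)%nat.
      { rewrite <- (length_seq n 0) at 2. apply filter_length_le. }
      simpl. destruct (excluded_middle_informative (P n)); simpl; lia.
Qed.

Lemma Rdiv_le_0_compat (a b : R) : 0 <= a -> 0 < b -> 0 <= a / b.
Proof. intros. unfold Rdiv. apply Rmult_le_pos; auto. left. apply Rinv_0_lt_compat; auto. Qed.

Lemma ratio_cv (c : nat -> nat) N : (forall n, (c n <= N)%nat) ->
  Un_cv (fun n => INR (c n) / INR n) 0.
Proof.
  intros Hc eps Heps.
  destruct (archimed (INR N / eps)) as [H1 _].
  assert (Hup : (0 <= up (INR N / eps))%Z).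
  { apply le_IZR. assert (0 <= INR N / eps).
    { apply Rdiv_le_0_compat; [apply pos_INR|lra]. } lra. }
  exists (S (Z.to_nat (up (INR N / eps)))). intros n Hn.
  unfold Rdist. rewrite Rminus_0_r.
  assert (Hnpos : 0 < INR n) by (apply lt_0_INR; lia).
  assert (Hn' : INR N / eps < INR n).
  { apply Rlt_le_trans with (IZR (up (INR N / eps))); auto.
    rewrite <- (Z2Nat.id _ Hup), <- INR_IZR_INZ. apply le_INR. lia. }
  rewrite Rabs_pos_eq.
  - apply Rle_lt_trans with (INR N / INR n).
    + unfold Rdiv. apply Rmult_le_compat_r.
      * left. apply Rinv_0_lt_compat; lra.
      * apply le_INR. auto.
    + apply (Rmult_lt_reg_r (INR n)); auto. unfold Rdiv.
      rewrite Rmult_assoc, Rinv_l by lra. rewrite Rmult_1_r.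
      apply (Rmult_lt_reg_r (/ eps)). apply Rinv_0_lt_compat; lra.
      rewrite (Rmult_comm eps), Rmult_assoc, Rinv_r by lra. lra.
  - apply Rdiv_le_0_compat; [apply pos_INR|lra].
Qed.

End Aux.

Theorem corollary3p1 (X : TwoNormed) (E : X -> Prop) (f : X -> X) :
  stat_ward_continuous E f ->
  forall (x0 : X) (u : nat -> X),
    E x0 -> (forall n, E (u n)) -> tn_conv u x0 ->
    tn_conv (fun n => f (u n)) (f x0).
Proof.
  intros Hsw x0 u Hx0 HE Hu z.
  apply NNPP. intro Hnc.
  assert (Hex : exists eps, eps > 0 /\ forall N, exists n, (n >= N)%nat /\
     tn X (vsub (f (u n)) (f x0)) z >= eps).
  { apply NNPP. intro Hno. apply Hnc. intros eps Heps.
    apply NNPP. intro H2. apply Hno. exists eps. split; auto.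
    intro N. apply NNPP. intro H3. apply H2. exists N. intros n Hn.
    unfold Rdist. rewrite Rminus_0_r, Rabs_pos_eq by apply tn_nonneg.
    apply Rnot_le_lt. intro H4. apply H3. exists n. split; auto. lra. }
  destruct Hex as [eps [Heps Hsel]].
  destruct (constructive_indefinite_description _
     (choice (fun N n => (n >= N)%nat /\ tn X (vsub (f (u n)) (f x0)) z >= eps) Hsel))
     as [phi Hphi].
  set (y := fun j => u (phi j)).
  set (w := fun k => (fun x : X => x) (if Nat.even k then x0 else y (Nat.div2 k))).
  assert (Hw : forall n, E (w n)).
  { intro n. unfold w, y. destruct (Nat.even n); auto. }
  assert (Hq : stat_quasi_cauchy w).
  { intros e z' He.
    destruct (Hu z' e He) as [N0 HN0].
    apply (ratio_cv _ (2 * N0)%nat). apply count_bound.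
    intros k Hk Hge.
    assert (Hlt : tn X (vsub (y (Nat.div2 k)) x0) z' < e).
    { assert (Hd : (Nat.div2 k >= N0)%nat).
      { destruct (Nat.Even_or_Odd k) as [[j ->]|[j ->]].
        - rewrite Nat.div2_double. lia.
        - replace (2 * j + 1)%nat with (S (2 * j)) by lia.
          rewrite Nat.div2_succ_double. lia. }
      specialize (HN0 (phi (Nat.div2 k))).
      assert (phi (Nat.div2 k) >= N0)%nat by (specialize (Hphi (Nat.div2 k)); lia).
      specialize (HN0 H). unfold Rdist in HN0. rewrite Rminus_0_r in HN0.
      apply Rle_lt_trans with (2 := HN0). apply Rle_abs. }
    destruct (delta_alt X (fun x => x) x0 y k) as [Hd|Hd]; fold w in Hd;
      rewrite Hd in Hge.
    - lra.
    - rewrite tn_swap in Hge. lra. }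
  specialize (Hsw w Hw Hq eps z Heps).
  destruct (Hsw (1/2)) as [N HN]; [lra|].
  specialize (HN (S N) ltac:(lia)).
  rewrite count_all in HN.
  - unfold Rdist in HN. rewrite Rminus_0_r, Rdiv_diag in HN.
    + rewrite Rabs_R1 in HN. lra.
    + apply not_0_INR. lia.
  - intro k.
    destruct (delta_alt X f x0 y k) as [Hd|Hd];
      change (delta (fun n => f (w n)) k) with
        (delta (fun k => f (if Nat.even k then x0 else y (Nat.div2 k))) k);
      rewrite Hd; [|rewrite tn_swap]; apply Hphi.
Qed.
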